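(* There are infinitely many values $\lambda\in(\sqrt{2},2)$ such that the tent map $T_\lambda:[0,1]\to[0,1]$ admits a closed set $L\subset[0,1]$ which is internally chain transitive but is not equal to $\omega(x,T_\lambda)$ for any $x\in[0,1]$.
   Context: For $\lambda\in(1,2]$ the tent map $T_\lambda:[0,1]\to[0,1]$ is $T_\lambda(x)=\lambda x$ for $x\in[0,1/2]$ and $T_\lambda(x)=\lambda(1-x)$ for $x\in[1/2,1]$; its critical point is $c=1/2$. For a continuous map $f$ on a compact metric space $(X,d)$: a $\delta$-pseudo-orbit is a finite or infinite sequence $\langle x_0,x_1,\dots\rangle$ with $d(f(x_i),x_{i+1})<\delta$ for all $i$; a set $A\subset X$ is internally chain transitive if for all $x,y\in A$ and every $\delta>0$ there is a $\delta$-pseudo-orbit $\langle x=x_0,x_1,\dots,x_n=y\rangle$ with all $x_i\in A$. The $\omega$-limit set of $x$ is $\omega(x,f)=\bigcap_{n\in\mathbb N}\overline{\{f^k(x):k\ge n\}}$. *)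

(* Defs.v *)
From Stdlib Require Import Reals Rtopology List.
Open Scope R_scope.

Definition tent (lam x : R) : R :=
  if Rle_dec x (1/2) then lam * x else lam * (1 - x).

Definition unit_interval (x : R) : Prop := 0 <= x <= 1.

Definition pseudo_orbit (f : R -> R) (delta : R) (z : nat -> R) (n : nat) : Prop :=
  forall i, (i < n)%nat -> Rabs (f (z i) - z (S i)) < delta.

Definition internally_chain_transitive (f : R -> R) (A : R -> Prop) : Prop :=
  forall x y, A x -> A y -> forall delta, delta > 0 ->
    exists (n : nat) (z : nat -> R),
      (1 <= n)%nat /\ z 0%nat = x /\ z n = y /\
      (forall i, (i <= n)%nat -> A (z i)) /\ pseudo_orbit f delta z n.

Definition omega_limit (f : R -> R) (x : R) (y : R) : Prop :=
  forall N : nat, forall eps, eps > 0 ->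
    exists k : nat, (N <= k)%nat /\ Rabs (Nat.iter k f x - y) < eps.

(* Main.v *)
Require Import Defs.
From Stdlib Require Import Reals Rtopology List.
Open Scope R_scope.
From Stdlib Require Import Lra Lia Psatz.

Module A.

Section Alg.
Variable l : R.
Hypothesis Hl1 : 13/8 <= l.
Hypothesis Hl2 : l < 2.
Definition DD := 1 + l + l*l.
Definition q1 := l / DD.
Definition q2 := l*l / DD.
Definition q3 := (l + l*l) / DD.
Definition aa := l/2.
Definition bb := l - l*l/2.
Definition ee := 1/2 - q1.

Lemma DD_pos : 0 < DD. Proof. unfold DD; nra. Qed.
Lemma q1D : q1 * DD = l. Proof. unfold q1; field; apply Rgt_not_eq, DD_pos. Qed.
Lemma q2D : q2 * DD = l*l. Proof. unfold q2; field; apply Rgt_not_eq, DD_pos. Qed.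
Lemma q3D : q3 * DD = l + l*l. Proof. unfold q3; field; apply Rgt_not_eq, DD_pos. Qed.

Ltac qs := pose proof DD_pos; pose proof q1D; pose proof q2D; pose proof q3D; unfold DD in *.

Lemma q1_pos : 0 < q1. Proof. qs. nra. Qed.
Lemma q1_lt : q1 < 1/2. Proof. qs. nra. Qed.
Lemma q2_gt : 1/2 < q2. Proof. qs. nra. Qed.
Lemma q2_lt_q3 : q2 < q3. Proof. qs. nra. Qed.
Lemma q3_lt_a : q3 < aa. Proof. qs. unfold aa. nra. Qed.
Lemma bb_pos : 0 < bb. Proof. unfold bb. nra. Qed.
Lemma bb_lt_q1 : bb < q1. Proof. qs. assert (bb * DD < l).
 { unfold bb, DD. assert (l*l - l - 1 > 0) by nra. assert (l*l/2 > 0) by nra.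
   replace ((l - l * l / 2) * (1 + l + l * l)) with (l - (l*l/2)*(l*l-l-1)) by field. nra. }
 unfold DD in *. nra. Qed.
Lemma q3_rel : q3 = q2 + q1. Proof. pose proof DD_pos. unfold q1,q2,q3,DD in *. field. lra. Qed.
Lemma q1_rel : l * (1 - q3) = q1. Proof. pose proof DD_pos. unfold q1,q2,q3,DD in *. field. lra. Qed.
Lemma q3_rel2 : l * (1 - q2) = q3. Proof. pose proof DD_pos. unfold q1,q2,q3,DD in *. field. lra. Qed.
Lemma q2_rel : l * q1 = q2. Proof. pose proof DD_pos. unfold q1,q2,q3,DD in *. field. lra. Qed.
Lemma W1_ge : 1/2 <= q3 - ee / l. Proof. qs. unfold ee. assert (0<l) by lra.
  apply Rmult_le_reg_r with l; auto. field_simplify; [|lra]. nra. Qed.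
Lemma W2_lt : q2 + ee / (l*l) < q3. Proof. qs. unfold ee. assert (0<l) by lra.
  apply Rmult_lt_reg_r with (l*l); [nra|]. field_simplify; [|lra]. nra. Qed.
End Alg.

End A.
Import A.

Definition chainR f (A : R -> Prop) d x y := exists n z, (1 <= n)%nat /\ z 0%nat = x /\ z n = y /\
  (forall i, (i <= n)%nat -> A (z i)) /\ pseudo_orbit f d z n.

Lemma chain_one f A d x y : A x -> A y -> Rabs (f x - y) < d -> chainR f A d x y.
Proof. intros Ax Ay H. exists 1%nat, (fun i => if Nat.eqb i 0 then x else y).
  repeat split; auto.
  - intros i Hi. destruct (Nat.eqb i 0); auto.
  - intros i Hi. assert (i = 0%nat) by lia. subst. simpl. auto.
Qed.

Lemma chain_trans f A d x y w : chainR f A d x y -> chainR f A d y w -> chainR f A d x w.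
Proof.
  intros [n1 [z1 [H1 [H2 [H3 [H4 H5]]]]]] [n2 [z2 [G1 [G2 [G3 [G4 G5]]]]]].
  exists (n1 + n2)%nat, (fun i => if Nat.leb i n1 then z1 i else z2 (i - n1)%nat).
  repeat split.
  - lia.
  - simpl. auto.
  - destruct (Nat.leb (n1+n2) n1) eqn:E.
    + apply Nat.leb_le in E. assert (n2 = 0%nat) by lia. lia.
    + replace (n1 + n2 - n1)%nat with n2 by lia. auto.
  - intros i Hi. destruct (Nat.leb i n1) eqn:E.
    + apply H4. apply Nat.leb_le in E; auto.
    + apply G4. lia.
  - intros i Hi. destruct (Nat.leb i n1) eqn:E; destruct (Nat.leb (S i) n1) eqn:E'.
    + apply H5. apply Nat.leb_le in E'. lia.
    + apply Nat.leb_le in E. apply Nat.leb_gt in E'. assert (i = n1) by lia. subst i.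
      replace (S n1 - n1)%nat with 1%nat by lia. rewrite H3, <- G2. apply G5. lia.
    + apply Nat.leb_gt in E. apply Nat.leb_le in E'. lia.
    + apply Nat.leb_gt in E. replace (S i - n1)%nat with (S (i - n1)) by lia. apply G5. lia.
Qed.

Lemma chain_step f A d x : d > 0 -> A x -> A (f x) -> chainR f A d x (f x).
Proof. intros. apply chain_one; auto. unfold Rminus. rewrite Rplus_opp_r, Rabs_R0. lra. Qed.

Definition rstar f A d x y := x = y \/ chainR f A d x y.

Lemma rstar_step f A d x : d > 0 -> A x -> A (f x) -> rstar f A d x (f x).
Proof. intros; right; apply chain_step; auto. Qed.

Lemma rstar_trans f A d x y w : rstar f A d x y -> rstar f A d y w -> rstar f A d x w.
Proof. intros [->|H] [<-|G]; [left; auto|right; auto|right; auto|right; eauto using chain_trans]. Qed.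

Lemma rstar_chain f A d x y w v : rstar f A d x y -> chainR f A d y w -> rstar f A d w v -> chainR f A d x v.
Proof. intros [->|H] G [<-|K]; eauto using chain_trans. Qed.

Lemma finite_sep (P : nat -> R) y : (forall n, y <> P n) ->
  forall N, exists m, 0 < m /\ forall n, (n < N)%nat -> m <= Rabs (y - P n).
Proof.
  intros H N. induction N as [|N IH].
  - exists 1. split; [lra| intros; lia].
  - destruct IH as [m [Hm Hm']]. assert (0 < Rabs (y - P N)).
    { apply Rabs_pos_lt. intro E. apply (H N). lra. }
    exists (Rmin m (Rabs (y - P N))). split. { apply Rmin_pos; auto. }
    intros n Hn. destruct (Nat.eq_dec n N) as [->|Hne].
    + apply Rmin_r.
    + eapply Rle_trans. apply Rmin_l. apply Hm'. lia.
Qed.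

Lemma seq_sep u v r y : 0 <= r < 1 -> y <> u -> (forall n, y <> u + r^n * v) ->
  exists m, 0 < m /\ forall n, m <= Rabs (y - (u + r^n * v)).
Proof.
  intros Hr Hu Hn. set (d := Rabs (y - u)). assert (Hd : 0 < d) by (apply Rabs_pos_lt; lra).
  destruct (Req_dec v 0) as [Hv|Hv].
  { exists d. split; auto. intro n. subst v. rewrite Rmult_0_r, Rplus_0_r. unfold d. lra. }
  assert (0 < d / 2 / Rabs v) as Hq. { apply Rdiv_lt_0_compat; [lra|apply Rabs_pos_lt; auto]. }
  destruct (pow_lt_1_zero r) with (y := d/2/Rabs v) as [N HN]. { rewrite Rabs_pos_eq; lra. } auto.
  destruct (finite_sep (fun n => u + r^n*v) y Hn N) as [m [Hm Hm']].
  exists (Rmin m (d/2)). split. { apply Rmin_pos; lra. }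
  intro n. destruct (Compare_dec.le_lt_dec N n) as [Hle|Hlt].
  - eapply Rle_trans. apply Rmin_r. specialize (HN n Hle).
    assert (Rabs (r^n * v) < d/2).
    { rewrite Rabs_mult. apply Rmult_lt_reg_r with (/ Rabs v).
      apply Rinv_0_lt_compat, Rabs_pos_lt; auto.
      rewrite Rmult_assoc, Rinv_r, Rmult_1_r. 2: apply Rgt_not_eq, Rabs_pos_lt; auto.
      unfold Rdiv in HN. auto. }
    unfold d in *. replace (y - (u + r^n*v)) with ((y - u) - r^n*v) by ring.
    pose proof (Rabs_triang_inv (y-u) (r^n*v)). lra.
  - eapply Rle_trans. apply Rmin_l. apply Hm'. auto.
Qed.

From Stdlib Require Import ClassicalEpsilon.

Lemma visits (f : R -> R) x (P : R -> Prop) :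
  (forall t, 0 <= Nat.iter t f x <= 1) ->
  (forall N, exists s, (N <= s)%nat /\ P (Nat.iter s f x)) ->
  exists l0, omega_limit f x l0 /\ forall e, e > 0 -> exists s, P (Nat.iter s f x) /\ Rabs (Nat.iter s f x - l0) < e.
Proof.
  intros Hb H.
  set (g := fun N => proj1_sig (constructive_indefinite_description _ (H N))).
  assert (Hg : forall N, (N <= g N)%nat /\ P (Nat.iter (g N) f x)).
  { intro N. unfold g. destruct (constructive_indefinite_description _ (H N)). simpl. auto. }
  destruct (Bolzano_Weierstrass (fun m => Nat.iter (g m) f x) (fun c => 0 <= c <= 1) (compact_P3 0 1))
    as [l0 Hl0].
  { intro m. apply Hb. }
  exists l0. split.
  - intros N eps Heps. destruct (Hl0 (disc l0 (mkposreal eps Heps)) N) as [p [Hp Hv]].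
    { exists (mkposreal eps Heps). intros z Hz; auto. }
    exists (g p). split. destruct (Hg p); lia. unfold disc in Hv. simpl in Hv. auto.
  - intros e He. destruct (Hl0 (disc l0 (mkposreal e He)) 0%nat) as [p [Hp Hv]].
    { exists (mkposreal e He). intros z Hz; auto. }
    exists (g p). split. apply Hg. unfold disc in Hv. simpl in Hv. auto.
Qed.


Section Main.
Variable l : R.
Variable k : nat.
Hypothesis Hl1 : 13/8 <= l.
Hypothesis Hl2 : l < 2.
Hypothesis Hk : l ^ (S k) * bb l = q3 l.

Notation T := (tent l).
Notation q1 := (q1 l). Notation q2 := (q2 l). Notation q3 := (q3 l).
Notation aa := (aa l). Notation bb := (bb l). Notation ee := (ee l).

Lemma tL x : x <= 1/2 -> T x = l * x.
Proof. intro H. unfold tent. destruct (Rle_dec x (1/2)); [auto|lra]. Qed.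
Lemma tR x : 1/2 <= x -> T x = l * (1 - x).
Proof. intro H. unfold tent. destruct (Rle_dec x (1/2)); [|auto].
  assert (x = 1/2) by lra. subst. lra. Qed.
Lemma t_le y : T y <= l/2.
Proof. unfold tent. destruct (Rle_dec y (1/2)); nra. Qed.

Lemma facts : 0 < q1 /\ q1 < 1/2 /\ 1/2 < q2 /\ q2 < q3 /\ q3 < aa /\ 0 < bb /\ bb < q1
  /\ q3 = q2 + q1 /\ l * (1 - q3) = q1 /\ l * (1 - q2) = q3 /\ l * q1 = q2
  /\ 1/2 <= q3 - ee / l /\ q2 + ee / (l*l) < q3 /\ aa = l/2 /\ ee = 1/2 - q1.
Proof. repeat split; first [reflexivity | apply q1_pos | apply q1_lt | apply q2_gt | apply q2_lt_q3
  | apply q3_lt_a | apply bb_pos | apply bb_lt_q1 | apply q3_rel | apply q1_rel | apply q3_rel2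
  | apply q2_rel | apply W1_ge | apply W2_lt]; lra. Qed.

Ltac F := pose proof facts as [F1 [F2 [F3 [F4 [F5 [F6 [F7 [F8 [F9 [F10 [F11 [F12 [F13 [F14 F15]]]]]]]]]]]]]].

Lemma T_q1 : T q1 = q2. Proof. F. rewrite tL; lra. Qed.
Lemma T_q2 : T q2 = q3. Proof. F. rewrite tR; lra. Qed.
Lemma T_q3 : T q3 = q1. Proof. F. rewrite tR; lra. Qed.
Lemma T_c : T (1/2) = aa. Proof. F. rewrite tL; lra. Qed.
Lemma T_a : T aa = bb. Proof. F. unfold A.bb. rewrite tR; [rewrite F14; field|lra]. Qed.

Definition bp i := l ^ i * bb.
Lemma lpos : 0 < l. Proof. lra. Qed.
Lemma bp_nonneg i : 0 <= bp i.
Proof. F. unfold bp. apply Rmult_le_pos; [apply pow_le; lra|lra]. Qed.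
Lemma bp_le i : (i <= k)%nat -> bp i <= q3 / l.
Proof. intro Hi. F. unfold bp. apply Rle_trans with (l^k * bb).
  apply Rmult_le_compat_r; [lra|apply Rle_pow; [lra|auto]].
  simpl in Hk. apply Rmult_le_reg_l with l; [lra|]. field_simplify; lra. Qed.
Lemma q3l : q3 / l < 1/2.
Proof. F. apply Rmult_lt_reg_l with l; [lra|]. field_simplify; lra. Qed.
Lemma T_bp i : (i <= k)%nat -> T (bp i) = bp (S i).
Proof. intro Hi. pose proof (bp_le i Hi). pose proof q3l. rewrite tL by lra. unfold bp. simpl. ring. Qed.
Lemma bp_Sk : bp (S k) = q3. Proof. exact Hk. Qed.
Lemma bp_0 : bp 0 = bb. Proof. unfold bp. simpl. ring. Qed.

Definition r := / (l*l*l).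
Lemma r_bounds : 0 < r < 1.
Proof. unfold r. split. apply Rinv_0_lt_compat. pose proof lpos. nra.
  rewrite <- Rinv_1. apply Rinv_lt_contravar; nra. Qed.
Lemma rn_bounds n : 0 < r^n <= 1.
Proof. pose proof r_bounds. split. apply pow_lt; lra.
  induction n. simpl; lra. simpl. nra. Qed.

Definition W0 n := q1 + r^n * ee.
Definition W1 n := q3 - r^n * ee / l.
Definition W2 n := q2 + r^n * ee / (l*l).

Lemma ee_pos : 0 < ee. Proof. F. lra. Qed.

Lemma T_W1 n : T (W1 n) = W0 n.
Proof. F. pose proof (rn_bounds n). pose proof ee_pos. unfold W1, W0.
  assert (r^n*ee/l <= ee/l). { unfold Rdiv. apply Rmult_le_compat_r. left; apply Rinv_0_lt_compat; lra. nra. }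
  rewrite tR by lra. rewrite <- F9. field. lra. Qed.
Lemma T_W2 n : T (W2 n) = W1 n.
Proof. F. pose proof (rn_bounds n). pose proof ee_pos. unfold W1, W2.
  assert (0 <= r^n*ee/(l*l)). { unfold Rdiv. apply Rmult_le_pos. nra. left; apply Rinv_0_lt_compat; nra. }
  rewrite tR by lra. rewrite <- F10. field. lra. Qed.
Lemma T_W0 n : T (W0 (S n)) = W2 n.
Proof. F. pose proof (rn_bounds n). pose proof ee_pos. pose proof r_bounds. unfold W0, W2.
  simpl. rewrite tL. rewrite <- F11. unfold r. field. lra. assert (r * r^n <= 1) by nra. assert (r*r^n*ee <= ee) by nra. lra. Qed.
Lemma W0_0 : W0 0 = 1/2. Proof. F. unfold W0. simpl. lra. Qed.

Definition Lset y := y = q1 \/ y = q2 \/ y = q3 \/ y = aa \/ (exists i, (i <= k)%nat /\ y = bp i)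
  \/ (exists n, y = W0 n) \/ (exists n, y = W1 n) \/ (exists n, y = W2 n).

Lemma Wbounds n : q1 < W0 n <= 1/2 /\ 1/2 <= W1 n < q3 /\ q2 < W2 n < q3.
Proof. F. pose proof (rn_bounds n). pose proof ee_pos. unfold W0, W1, W2.
  assert (0 < r^n*ee/l <= ee/l). { unfold Rdiv. split. apply Rmult_lt_0_compat. nra. apply Rinv_0_lt_compat; lra.
    apply Rmult_le_compat_r. left; apply Rinv_0_lt_compat; lra. nra. }
  assert (0 < r^n*ee/(l*l) <= ee/(l*l)). { unfold Rdiv. split. apply Rmult_lt_0_compat. nra. apply Rinv_0_lt_compat; nra.
    apply Rmult_le_compat_r. left; apply Rinv_0_lt_compat; nra. nra. }
  repeat split; nra. Qed.

Lemma L_unit y : Lset y -> unit_interval y.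
Proof. F. pose proof q3l. unfold unit_interval.
  intros [->|[->|[->|[->|[[i [Hi ->]]|[[n ->]|[[n ->]|[n ->]]]]]]]]; try lra.
  - pose proof (bp_nonneg i). pose proof (bp_le i Hi). lra.
  - pose proof (Wbounds n); lra.
  - pose proof (Wbounds n); lra.
  - pose proof (Wbounds n); lra.
Qed.

Lemma L_gap y : Lset y -> ~ (q3 < y < aa).
Proof. F. pose proof q3l.
  intros [->|[->|[->|[->|[[i [Hi ->]]|[[n ->]|[[n ->]|[n ->]]]]]]]]; try lra.
  - pose proof (bp_le i Hi). lra.
  - pose proof (Wbounds n); lra.
  - pose proof (Wbounds n); lra.
  - pose proof (Wbounds n); lra.
Qed.


Ltac minle := match goal with |- Rmin ?a ?b <= ?c => first [ apply Rle_trans with a; [apply Rmin_l| minle] | apply Rle_trans with b; [apply Rmin_r| minle] ] | |- ?x <= ?x => apply Rle_refl end.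

Lemma L_closed : closed_set Lset.
Proof.
  unfold closed_set, open_set, complementary. intros y Hy.
  assert (N1 : y <> q1) by (intro; apply Hy; left; auto).
  assert (N2 : y <> q2) by (intro; apply Hy; right; left; auto).
  assert (N3 : y <> q3) by (intro; apply Hy; do 2 right; left; auto).
  assert (N4 : y <> aa) by (intro; apply Hy; do 3 right; left; auto).
  destruct (finite_sep (fun n => if Nat.leb n k then bp n else q1) y) with (N := S k) as [m5 [Hm5 Hm5']].
  { intros n E. destruct (Nat.leb n k) eqn:En. apply Hy. do 4 right; left. exists n. split.
    apply Nat.leb_le; auto. auto. auto. }
  pose proof r_bounds as Hr.
  destruct (seq_sep q1 ee r y) as [m6 [Hm6 Hm6']]; [lra|auto| |].
  { intros n E. apply Hy. do 5 right; left. exists n. unfold W0. auto. }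
  destruct (seq_sep q3 (- (ee/l)) r y) as [m7 [Hm7 Hm7']]; [lra|auto| |].
  { intros n E. apply Hy. do 6 right; left. exists n. unfold W1. rewrite E. field. lra. }
  destruct (seq_sep q2 (ee/(l*l)) r y) as [m8 [Hm8 Hm8']]; [lra|auto| |].
  { intros n E. apply Hy. do 7 right. exists n. unfold W2. rewrite E. field. lra. }
  assert (P1 : 0 < Rabs (y - q1)) by (apply Rabs_pos_lt; lra).
  assert (P2 : 0 < Rabs (y - q2)) by (apply Rabs_pos_lt; lra).
  assert (P3 : 0 < Rabs (y - q3)) by (apply Rabs_pos_lt; lra).
  assert (P4 : 0 < Rabs (y - aa)) by (apply Rabs_pos_lt; lra).
  set (d := Rmin (Rmin (Rmin (Rabs (y - q1)) (Rabs (y - q2))) (Rmin (Rabs (y - q3)) (Rabs (y - aa))))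
                 (Rmin (Rmin m5 m6) (Rmin m7 m8))).
  assert (Hd : 0 < d). { unfold d. repeat apply Rmin_pos; auto. }
  exists (mkposreal d Hd). intros z Hz Lz. unfold disc in Hz. simpl in Hz.
  assert (d <= Rabs (y - q1) /\ d <= Rabs (y - q2) /\ d <= Rabs (y - q3) /\ d <= Rabs (y - aa)
     /\ d <= m5 /\ d <= m6 /\ d <= m7 /\ d <= m8) as (D1&D2&D3&D4&D5&D6&D7&D8).
  { unfold d. repeat split; minle. }
  rewrite Rabs_minus_sym in Hz.
  destruct Lz as [->|[->|[->|[->|[[i [Hi ->]]|[[n ->]|[[n ->]|[n ->]]]]]]]]; try lra.
  - specialize (Hm5' i ltac:(lia)). simpl in Hm5'. assert (Nat.leb i k = true) as E by (apply Nat.leb_le; auto).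
    rewrite E in Hm5'. lra.
  - specialize (Hm6' n). unfold W0 in Hz. lra.
  - specialize (Hm7' n). replace (q3 + r^n * - (ee/l)) with (W1 n) in Hm7' by (unfold W1; field; lra). lra.
  - specialize (Hm8' n). replace (q2 + r^n * (ee/(l*l))) with (W2 n) in Hm8' by (unfold W2; field; lra). lra.
Qed.

Lemma Lq1 : Lset q1. Proof. left; auto. Qed.
Lemma Lq2 : Lset q2. Proof. right; left; auto. Qed.
Lemma Lq3 : Lset q3. Proof. do 2 right; left; auto. Qed.
Lemma La : Lset aa. Proof. do 3 right; left; auto. Qed.
Lemma Lbp i : (i <= k)%nat -> Lset (bp i). Proof. intro. do 4 right; left. eauto. Qed.
Lemma LW0 n : Lset (W0 n). Proof. do 5 right; left. eauto. Qed.
Lemma LW1 n : Lset (W1 n). Proof. do 6 right; left. eauto. Qed.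
Lemma LW2 n : Lset (W2 n). Proof. do 7 right. eauto. Qed.
Lemma Lb : Lset bb. Proof. rewrite <- bp_0. apply Lbp. lia. Qed.
Lemma Lc : Lset (1/2). Proof. rewrite <- W0_0. apply LW0. Qed.

Section ICT.
Variable d : R.
Hypothesis Hd : d > 0.
Notation RS := (rstar T Lset d).
Notation CR := (chainR T Lset d).

Lemma rs_map x y : Lset x -> Lset y -> T x = y -> RS x y.
Proof. intros Hx Hy E. rewrite <- E. apply rstar_step; auto. rewrite E; auto. Qed.

Lemma bp_to_q3 : forall j i, (i + j = k)%nat -> RS (bp i) q3.
Proof. induction j; intros i Hi.
  - apply rs_map. apply Lbp; lia. apply Lq3. rewrite T_bp by lia. replace i with k by lia. apply bp_Sk.
  - eapply rstar_trans. apply (rs_map (bp i) (bp (S i))). apply Lbp; lia. apply Lbp; lia. apply T_bp; lia.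
    apply IHj. lia. Qed.

Lemma a_to_q3 : RS aa q3.
Proof. eapply rstar_trans. apply rs_map. apply La. apply (Lbp 0); lia. rewrite T_a, bp_0; auto.
  apply (bp_to_q3 k 0). lia. Qed.

Lemma c_to_a : RS (1/2) aa. Proof. apply rs_map. apply Lc. apply La. apply T_c. Qed.

Lemma W0_to_c : forall n, RS (W0 n) (1/2).
Proof. induction n. rewrite W0_0. left; auto.
  eapply rstar_trans. apply rs_map. apply LW0. apply LW2. apply T_W0.
  eapply rstar_trans. apply rs_map. apply LW2. apply LW1. apply T_W2.
  eapply rstar_trans. apply rs_map. apply LW1. apply LW0. apply T_W1. auto. Qed.

Lemma to_q3 u : Lset u -> RS u q3.
Proof.
  assert (Hc : RS (1/2) q3) by (eapply rstar_trans; [apply c_to_a|apply a_to_q3]).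
  intros [->|[->|[->|[->|[[i [Hi ->]]|[[n ->]|[[n ->]|[n ->]]]]]]]].
  - eapply rstar_trans. apply rs_map. apply Lq1. apply Lq2. apply T_q1. apply rs_map. apply Lq2. apply Lq3. apply T_q2.
  - apply rs_map. apply Lq2. apply Lq3. apply T_q2.
  - left; auto.
  - apply a_to_q3.
  - apply (bp_to_q3 (k - i) i). lia.
  - eapply rstar_trans. apply W0_to_c. auto.
  - eapply rstar_trans. apply rs_map. apply LW1. apply LW0. apply T_W1. eapply rstar_trans. apply W0_to_c. auto.
  - eapply rstar_trans. apply rs_map. apply LW2. apply LW1. apply T_W2.
    eapply rstar_trans. apply rs_map. apply LW1. apply LW0. apply T_W1. eapply rstar_trans. apply W0_to_c. auto.
Qed.

Lemma a_to_bp : forall i, (i <= k)%nat -> RS aa (bp i).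
Proof. induction i; intro Hi.
  - apply rs_map. apply La. apply Lbp; lia. rewrite T_a, bp_0; auto.
  - eapply rstar_trans. apply IHi. lia. apply rs_map. apply Lbp; lia. apply Lbp; lia. apply T_bp; lia. Qed.

Lemma good v : Lset v -> exists n, RS (W1 n) v.
Proof.
  assert (H0 : RS (W1 0) aa).
  { eapply rstar_trans. apply rs_map. apply LW1. apply LW0. apply T_W1. rewrite W0_0. apply c_to_a. }
  assert (H3 : RS (W1 0) q3) by (eapply rstar_trans; [apply H0|apply a_to_q3]).
  intros [->|[->|[->|[->|[[i [Hi ->]]|[[n ->]|[[n ->]|[n ->]]]]]]]].
  - exists 0%nat. eapply rstar_trans. apply H3. apply rs_map. apply Lq3. apply Lq1. apply T_q3.
  - exists 0%nat. eapply rstar_trans. apply H3. eapply rstar_trans. apply rs_map. apply Lq3. apply Lq1. apply T_q3.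
    apply rs_map. apply Lq1. apply Lq2. apply T_q1.
  - exists 0%nat. auto.
  - exists 0%nat. auto.
  - exists 0%nat. eapply rstar_trans. apply H0. apply a_to_bp; auto.
  - exists n. apply rs_map. apply LW1. apply LW0. apply T_W1.
  - exists n. left; auto.
  - exists (S n). eapply rstar_trans. apply rs_map. apply LW1. apply LW0. apply T_W1.
    apply rs_map. apply LW0. apply LW2. apply T_W0.
Qed.

Lemma W1_down : forall j n, RS (W1 (j + n)) (W1 n).
Proof. induction j; intro n. left; auto. simpl.
  eapply rstar_trans. apply rs_map. apply LW1. apply LW0. apply T_W1.
  eapply rstar_trans. apply rs_map. apply LW0. apply LW2. apply T_W0.
  eapply rstar_trans. apply rs_map. apply LW2. apply LW1. apply T_W2. auto. Qed.

Lemma q3_to_W1 N : r^N * ee / l < d -> CR q3 (W1 N).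
Proof. intro HN.
  assert (C1 : CR q3 q1).
  { pose proof (chain_step T Lset d q3 Hd Lq3) as H. rewrite T_q3 in H. apply H. apply Lq1. }
  assert (C2 : CR q2 (W1 N)).
  { apply chain_one. apply Lq2. apply LW1. rewrite T_q2. unfold W1.
    replace (q3 - (q3 - r^N*ee/l)) with (r^N*ee/l) by ring.
    pose proof (rn_bounds N). pose proof ee_pos. rewrite Rabs_pos_eq. auto.
    unfold Rdiv. apply Rmult_le_pos. nra. left; apply Rinv_0_lt_compat; lra. }
  eapply chain_trans. apply C1. eapply rstar_chain. apply rs_map. apply Lq1. apply Lq2. apply T_q1.
  apply C2. left; auto. Qed.

End ICT.

Lemma ICT_L : internally_chain_transitive T Lset.
Proof.
  intros x y Hx Hy d Hd.
  destruct (good d Hd y Hy) as [n Hn].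
  pose proof r_bounds as Hr. pose proof ee_pos.
  destruct (pow_lt_1_zero r) with (y := d * l / ee) as [N0 HN0].
  { rewrite Rabs_pos_eq; lra. } { apply Rdiv_lt_0_compat; nra. }
  assert (HN : r ^ (N0 + S n) * ee / l < d).
  { specialize (HN0 (N0 + S n)%nat ltac:(lia)). rewrite Rabs_pos_eq in HN0 by (apply pow_le; lra).
    apply Rmult_lt_reg_r with (l / ee). apply Rdiv_lt_0_compat; lra.
    replace (r ^ (N0 + S n) * ee / l * (l / ee)) with (r ^ (N0 + S n)) by (field; lra).
    replace (d * (l/ee)) with (d*l/ee) by (field; lra). auto. }
  assert (C : chainR T Lset d x y).
  { eapply rstar_chain. apply (to_q3 d Hd x Hx). apply (q3_to_W1 d Hd _ HN).
    eapply rstar_trans. replace (N0 + S n)%nat with ((N0 + 1) + n)%nat by lia. apply (W1_down d Hd). auto. }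
  exact C.
Qed.

Lemma T_range y : 0 <= y <= 1 -> 0 <= T y <= 1.
Proof. intro Hy. unfold tent. destruct (Rle_dec y (1/2)); split; nra. Qed.

Lemma iter_unit x : unit_interval x -> forall t, 0 <= Nat.iter t T x <= 1.
Proof. intros Hx t. induction t. simpl. apply Hx. simpl. apply T_range; auto. Qed.

Lemma core_inv y : bb <= y <= aa -> bb <= T y <= aa.
Proof. F. intro Hy. split; [|rewrite F14; apply t_le].
  destruct (Rle_dec y (1/2)).
  - rewrite tL by lra. nra.
  - rewrite tR by lra. unfold A.bb. rewrite F14 in Hy. nra. Qed.

Lemma T3 dd : 0 < dd -> l*l*dd <= q2 - 1/2 -> T (T (T (q3 + dd))) = q3 + l*l*l*dd.
Proof. F. intros H1 H2. rewrite (tR (q3 + dd)) by lra.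
  replace (l * (1 - (q3 + dd))) with (q1 - l*dd) by (rewrite <- F9; ring).
  assert (0 < l*dd) by (apply Rmult_lt_0_compat; lra). rewrite (tL (q1 - l*dd)) by lra. replace (l * (q1 - l*dd)) with (q2 - l*l*dd) by (rewrite <- F11; ring).
  rewrite (tR (q2 - l*l*dd)) by lra. rewrite <- F10. ring. Qed.

Lemma growth x eps : 0 < eps -> l*l*eps <= q2 - 1/2 ->
  forall n s dd, Nat.iter s T x = q3 + dd -> 0 < dd -> dd <= eps -> eps <= dd * (l*l*l)^(S n) ->
  exists s', (s <= s')%nat /\ eps <= (Nat.iter s' T x - q3) * (l*l*l) /\ Nat.iter s' T x - q3 <= eps.
Proof.
  intros He He2 n. induction n; intros s dd Hs Hd1 Hd2 Hd3.
  - exists s. split. lia. rewrite Hs. simpl in Hd3. split; nra.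
  - destruct (Rle_dec eps (dd * (l*l*l))) as [Hc|Hc].
    + exists s. split. lia. rewrite Hs. split; nra.
    + assert (E : Nat.iter (S (S (S s))) T x = q3 + l*l*l*dd).
      { simpl. rewrite Hs. apply T3. auto. nra. }
      apply Rnot_le_lt in Hc. assert (0 < l*l*l) by (pose proof lpos; nra).
      destruct (IHn (S (S (S s))) (l*l*l*dd) E) as [s' [Hs' Hs'']].
      apply Rmult_lt_0_compat; lra. lra.
      { replace (l*l*l*dd * (l*l*l)^(S n)) with (dd * (l*l*l)^(S (S n))) by (simpl; ring). auto. }
      exists s'. split. lia. auto.
Qed.

Lemma lk_bb : l^k * bb = q3 / l.
Proof. simpl in Hk. apply Rmult_eq_reg_l with l; [|lra]. rewrite <- Hk. field. lra. Qed.

Lemma fwd h : 0 <= h -> l^k * h <= 1/2 - q3/l -> forall i, (i <= S k)%nat -> Nat.iter i T (bb + h) = l^i * (bb + h).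
Proof.
  intros H1 H2 i. induction i; intro Hi. simpl. ring.
  simpl Nat.iter. rewrite IHi by lia.
  assert (l^i * (bb+h) <= l^k * (bb + h)).
  { apply Rmult_le_compat_r. F. lra. apply Rle_pow. lra. lia. }
  rewrite tL. simpl. ring. pose proof lk_bb. lra. Qed.

Lemma not_omega x : unit_interval x -> ~ (forall y, Lset y <-> omega_limit T x y).
Proof.
  intros Hx H. F. pose proof (iter_unit x Hx) as Hu.
  assert (omc : forall N eps, eps > 0 -> exists t, (N <= t)%nat /\ Rabs (Nat.iter t T x - 1/2) < eps).
  { intros. apply (proj1 (H _) Lc); auto. }
  assert (omb : forall N eps, eps > 0 -> exists t, (N <= t)%nat /\ Rabs (Nat.iter t T x - bb) < eps).
  { intros. apply (proj1 (H _) Lb); auto. }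
  assert (Hcore : exists t0, forall t, (t0 <= t)%nat -> bb <= Nat.iter t T x <= aa).
  { destruct (Classical_Prop.classic (exists t, (1 <= t)%nat /\ bb <= Nat.iter t T x)) as [[t0 [Ht0 Hb0]]|Hno].
    - exists t0. assert (forall j, bb <= Nat.iter (j + t0) T x <= aa).
      { induction j. simpl. split; auto. destruct t0. lia. simpl. rewrite F14. apply t_le.
        simpl. apply core_inv. auto. }
      intros t Ht. replace t with ((t - t0) + t0)%nat by lia. auto.
    - exfalso. assert (Hlt : forall t, (1 <= t)%nat -> Nat.iter t T x < bb).
      { intros t Ht. destruct (Rlt_le_dec (Nat.iter t T x) bb); auto. exfalso. apply Hno. eauto. }
      assert (Hg : forall j, Nat.iter (S j) T x = l^j * Nat.iter 1 T x).
      { induction j. simpl. ring. change (Nat.iter (S (S j)) T x) with (T (Nat.iter (S j) T x)).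
        specialize (Hlt (S j) ltac:(lia)). rewrite tL by lra. rewrite IHj. simpl. ring. }
      destruct (Hu 1%nat) as [H10 _]. destruct (Rle_lt_or_eq_dec _ _ H10) as [Hp|H0].
      + destruct (Pow_x_infinity l) with (b := bb / Nat.iter 1 T x) as [N HN].
        { rewrite Rabs_pos_eq; lra. }
        specialize (HN N ltac:(lia)). rewrite Rabs_pos_eq in HN by (apply pow_le; lra).
        specialize (Hlt (S N) ltac:(lia)). rewrite Hg in Hlt.
        assert (bb / Nat.iter 1 T x * Nat.iter 1 T x = bb) by (field; lra). nra.
      + destruct (omc 1%nat (1/4)) as [t [Ht Hc]]. lra.
        destruct t. lia. rewrite Hg, <- H0 in Hc. rewrite Rmult_0_r in Hc.
        rewrite Rabs_left in Hc; lra. }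
  destruct Hcore as [t0 Ht0].
  set (eps := Rmin ((aa - q3)/2) ((q2 - 1/2)/(l*l))).
  assert (Heps : 0 < eps) by (unfold eps; apply Rmin_pos; [lra| apply Rdiv_lt_0_compat; nra]).
  assert (Heps1 : eps <= (aa - q3)/2) by apply Rmin_l.
  assert (Heps2 : l*l*eps <= q2 - 1/2).
  { assert (eps <= (q2 - 1/2)/(l*l)) by apply Rmin_r.
    apply Rmult_le_compat_l with (r := l*l) in H0; [|nra]. replace (l*l*((q2-1/2)/(l*l))) with (q2 - 1/2) in H0 by (field; lra). lra. }
  assert (Hlk : 0 < l^(S k)) by (apply pow_lt; lra).
  set (eta := Rmin eps (aa - q3) / l^(S k)).
  assert (Heta : 0 < eta) by (unfold eta; apply Rdiv_lt_0_compat; [apply Rmin_pos|]; lra).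
  assert (V : forall N, exists s, (N <= s)%nat /\ eps <= (Nat.iter s T x - q3) * (l*l*l) /\ Nat.iter s T x - q3 <= eps).
  { intro N. destruct (omb (Nat.max N t0) eta Heta) as [t [Ht Hbt]].
    specialize (Ht0 t ltac:(lia)).
    set (h := Nat.iter t T x - bb).
    assert (Hh0 : 0 <= h) by (unfold h; lra).
    assert (Hh1 : h < eta) by (unfold h; rewrite Rabs_pos_eq in Hbt; lra).
    assert (Hdd : l^(S k) * h < Rmin eps (aa - q3)).
    { unfold eta in Hh1. apply Rmult_lt_compat_l with (r := l^(S k)) in Hh1; auto.
      replace (l ^ S k * (Rmin eps (aa - q3) / l ^ S k)) with (Rmin eps (aa - q3)) in Hh1 by (field; lra). auto. }
    assert (Hm1 : Rmin eps (aa - q3) <= eps) by apply Rmin_l.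
    assert (Hm2 : Rmin eps (aa - q3) <= aa - q3) by apply Rmin_r.
    assert (Hlkh : l^k * h <= 1/2 - q3/l).
    { simpl in Hdd. apply Rmult_le_reg_l with l. lra.
      replace (l * (1/2 - q3/l)) with (aa - q3) by (rewrite F14; field; lra). nra. }
    assert (E : Nat.iter (S k + t) T x = q3 + l^(S k) * h).
    { rewrite Nat.iter_add. replace (Nat.iter t T x) with (bb + h) by (unfold h; ring).
      rewrite fwd; auto. rewrite Rmult_plus_distr_l, Hk. auto. }
    destruct (Rle_lt_or_eq_dec _ _ Hh0) as [Hpos|Hz].
    - set (dd := l^(S k) * h).
      assert (Hddp : 0 < dd) by (unfold dd; nra).
      destruct (Pow_x_infinity (l*l*l)) with (b := eps / dd) as [n Hn].
      { rewrite Rabs_pos_eq; nra. }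
      specialize (Hn n ltac:(lia)). rewrite Rabs_pos_eq in Hn by (apply pow_le; nra).
      destruct (growth x eps Heps Heps2 n (S k + t) dd E Hddp) as [s' [Hs1 Hs2]].
      { unfold dd. lra. }
      { assert (eps / dd * dd = eps) by (field; lra).
        assert ((l*l*l)^n <= (l*l*l)^(S n)) by (apply Rle_pow; [nra|lia]). nra. }
      exists s'. split. lia. auto.
    - exfalso. rewrite <- Hz, Rmult_0_r, Rplus_0_r in E.
      assert (Hper : forall j, Nat.iter (j + (S k + t)) T x = q1 \/ Nat.iter (j + (S k + t)) T x = q2 \/ Nat.iter (j + (S k + t)) T x = q3).
      { induction j. change (0 + (S k + t))%nat with (S k + t)%nat. rewrite E. auto.
        change (Nat.iter (S j + (S k + t)) T x) with (T (Nat.iter (j + (S k + t)) T x)).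
        destruct IHj as [-> | [-> | ->]]. rewrite T_q1; auto. rewrite T_q2; auto. rewrite T_q3; auto. }
      destruct (omc (S k + t)%nat (Rmin (1/2 - q1) (q2 - 1/2))) as [s [Hs Hc]].
      { apply Rmin_pos; lra. }
      assert (Rmin (1/2 - q1) (q2 - 1/2) <= 1/2 - q1) by apply Rmin_l.
      assert (Rmin (1/2 - q1) (q2 - 1/2) <= q2 - 1/2) by apply Rmin_r.
      specialize (Hper (s - (S k + t))%nat).
      replace (s - (S k + t) + (S k + t))%nat with s in Hper by lia.
      destruct Hper as [E1|[E1|E1]]; rewrite E1 in Hc.
      + rewrite Rabs_left in Hc; lra.
      + rewrite Rabs_pos_eq in Hc; lra.
      + rewrite Rabs_pos_eq in Hc; lra. }
  destruct (visits T x (fun y => eps <= (y - q3) * (l*l*l) /\ y - q3 <= eps) Hu V) as [l0 [Hom Happ]].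
  assert (HL : Lset l0) by (apply H; auto).
  destruct (Happ (eps / (2 * (l*l*l)))) as [s [[P1 P2] Hs]].
  { apply Rdiv_lt_0_compat; nra. }
  apply (L_gap l0 HL).
  assert (L3 : 4 < l*l*l) by nra.
  set (e3 := eps / (2 * (l*l*l))) in *.
  assert (He3 : e3 * (2 * (l*l*l)) = eps) by (unfold e3; field; nra).
  assert (e3 > 0) by nra.
  apply Rabs_def2 in Hs. split; nra.
Qed.

End Main.


Definition Fam k l := 13/8 <= l < 2 /\ l ^ (S k) * bb l = q3 l.

Lemma family k : (2 <= k)%nat -> exists l, Fam k l.
Proof.
  intro Hk.
  set (G := fun x => x + x*x - x^(S k) * (x - x*x/2) * (1 + x + x*x)).
  assert (HG : continuity G) by (unfold G; reg).
  destruct (IVT G (13/8) 2 HG) as [z [Hz Gz]].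
  - lra.
  - unfold G. assert (HP : (13/8)^3 <= (13/8)^(S k)) by (apply Rle_pow; [lra|lia]).
    replace ((13/8)^3) with (2197/512) in HP by (simpl; field). lra.
  - unfold G. assert (2 ^ S k * (2 - 2*2/2) = 0) by (replace (2 - 2*2/2) with 0 by field; ring). lra.
  - assert (z <> 2). { intro E. subst z. unfold G in Gz. assert (2 ^ S k * (2 - 2*2/2) = 0) by (replace (2 - 2*2/2) with 0 by field; ring). lra. }
    exists z. split. lra. unfold G in Gz.
    assert (0 < 1 + z + z*z) by nra.
    assert (E : z^(S k) * bb z * (1+z+z*z) = z + z*z) by (unfold bb; lra).
    unfold q3, DD. rewrite <- E. field. lra.
Qed.

Lemma fam_inj k k' l : Fam k l -> Fam k' l -> k = k'.
Proof.
  intros [[H1 H1'] H2] [G1 G2]. assert (0 < bb l) by (apply bb_pos; lra).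
  assert (E : l^(S k) = l^(S k')).
  { apply Rmult_eq_reg_r with (bb l); [|lra]. rewrite H2, G2; auto. }
  destruct (Nat.lt_trichotomy k k') as [h|[h|h]]; auto.
  - pose proof (Rlt_pow l (S k) (S k') ltac:(lra) ltac:(lia)). lra.
  - pose proof (Rlt_pow l (S k') (S k) ltac:(lra) ltac:(lia)). lra.
Qed.

Lemma avoid : forall (lst : list R) K, exists k l, (K <= k)%nat /\ (2 <= k)%nat /\ Fam k l /\ ~ In l lst.
Proof.
  induction lst as [|h t IH]; intro K.
  - destruct (family (K + 2) ltac:(lia)) as [l Hl]. exists (K+2)%nat, l. split; [lia|split; [lia|split; [exact Hl|intros []]]].
  - destruct (IH K) as [k1 [l1 [A1 [B1 [C1 D1]]]]].
    destruct (Req_dec l1 h) as [E|E].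
    + destruct (IH (S k1)) as [k2 [l2 [A2 [B2 [C2 D2]]]]].
      exists k2, l2. split; [lia|split; [lia|split; [exact C2|]]].
      intros [E2|E2]; [|auto]. subst. pose proof (fam_inj _ _ _ C1 C2). lia.
    + exists k1, l1. split; [lia|split; [lia|split; [exact C1|]]]. intros [E2|E2]; auto.
Qed.

Theorem mainTheorem1 :
  forall l : list R,
    exists lam : R,
      ~ In lam l /\ sqrt 2 < lam < 2 /\
      exists L : R -> Prop,
        (forall y, L y -> unit_interval y) /\
        closed_set L /\
        (exists y, L y) /\
        internally_chain_transitive (tent lam) L /\
        (forall x, unit_interval x ->
           ~ (forall y, L y <-> omega_limit (tent lam) x y)).
Proof.
  intro lst. destruct (avoid lst 0) as [k [lam [_ [_ [[[H1 H1'] H2] D]]]]].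
  exists lam. split; [exact D|]. split.
  { split; [|exact H1']. pose proof (sqrt_sqrt 2 ltac:(lra)). pose proof (sqrt_pos 2). nra. }
  exists (Lset lam k). split; [|split; [|split; [|split]]].
  - apply (L_unit lam k H1 H1' H2).
  - apply (L_closed lam k H1 H1').
  - exists (1/2). apply (Lc lam k H1 H1').
  - apply (ICT_L lam k H1 H1' H2).
  - intros x Hx. apply (not_omega lam k H1 H1' H2 x Hx).
Qed.
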